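(* Assume the well-posedness and controllability assumptions below. Then the rotated problem $\bar{\mathbb{P}}(x,\theta)$ is recursively feasible (if it is feasible at $(x_k,\theta_k)$, it is feasible at $(x_{k+1},\theta_{k+1})$ for the closed-loop successor state and any $\theta_{k+1}\in\mathcal{C}(\theta_k)$) and it has the same set of minimizers as $\mathbb{P}(x,\theta)$. Let $\tilde\kappa_N$ be the receding horizon control law of $\bar{\mathbb{P}}$ and $\widetilde V_N^\star$ its optimal value. If moreover the strict stochastic dissipativity assumption below holds, then along the closed loop $x_{k+1}=f(x_k,\tilde\kappa_N(x_k,\theta_k),\theta_k)$, $$\mathcal{L}\widetilde V_N^\star(x_k,\theta_k):=\mathbb{E}[\widetilde V_N^\star(x_{k+1},\theta_{k+1})-\widetilde V_N^\star(x_k,\theta_k)\mid\mathfrak{F}_k]\le-\rho(x_k,\theta_k),$$ where $\rho:\mathbb{R}^n\times\mathcal{N}\to\mathbb{R}_+$ is positive definite in its first argument with respect to $x_s$.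
   Context: Setting: $\mathcal{N}=\{1,\dots,\nu\}$; $\{\theta_k\}$ a time-homogeneous Markov chain on $\mathcal{N}$ with transition matrix $P=(p_{ij})$ on a filtered probability space $(\Omega,\mathfrak{F},\{\mathfrak{F}_k\},\mathbb{P})$, $\mathfrak{F}_k$ generated by the history up to time $k$; system $x_{k+1}=f(x_k,u_k,\theta_k)$ ($x_k\in\mathbb{R}^n$, $u_k\in\mathbb{R}^m$, $x_k,\theta_k$ measured at time $k$); constraints $(x_k,u_k)\in Y_{\theta_k}$; stage cost $\ell$. $u\lhd\mathfrak{F}_k$ means $\mathfrak{F}_k$-measurable. Cover $\mathcal{C}(i)=\{j:p_{ij}>0\}$; bet node $\mathrm{bet}(i)\in\mathcal{C}(i)$ maximizing $p_{ij}$ over $j\in\mathcal{C}(i)$. Well-posedness: each $\ell(\cdot,\cdot,\theta)$ nonnegative, lower semicontinuous, level-bounded in $u$ locally uniformly in $x$; $f(\cdot,\cdot,\theta)$ continuous; $Y_\theta$ nonempty compact; chain irreducible and aperiodic. Optimal steady states $(x_s^\theta,u_s^\theta)$ minimize $\ell(x,u,\theta)$ s.t. $f(x,u,\theta)=x$, $(x,u)\in Y_\theta$, with value $\ell_s(\theta)$. Controllability: for all $i,j$ there is $\bar u_s^{i,j}$ with $(x_s^i,\bar u_s^{i,j})\in Y_j$, $f(x_s^i,\bar u_s^{i,j},j)=x_s^{\mathrm{bet}(j)}$. Common optimal equilibrium: there is one optimal steady state $(x_s,u_s)=(0,0)$ common to all modes; $\ell_s$ denotes the corresponding optimal steady-state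 cost (treated as a single value). Strict stochastic dissipativity assumption: in addition to the common optimal equilibrium, there are a function $\lambda:\mathbb{R}^n\times\mathcal{N}\to\mathbb{R}$, lower semicontinuous in its first argument, with $\lambda(x_s,\theta)=\lambda_s$ independent of $\theta$, and a convex $\rho:\mathbb{R}^n\times\mathcal{N}\to\mathbb{R}_+$, positive definite with respect to $x_s$ ($\rho(x_s,\theta)=0$, $\rho(x,\theta)>0$ for $x\ne x_s$), such that for all states, inputs and modes $\mathcal{L}\lambda(x_k,\theta_k)\le \ell(x_k,u_k,\theta_k)-\ell_s-\rho(x_k,\theta_k)$, where $\mathcal{L}\lambda(x_k,\theta_k):=\mathbb{E}[\lambda(x_{k+1},\theta_{k+1})-\lambda(x_k,\theta_k)\mid\mathfrak{F}_k]$ with $x_{k+1}=f(x_k,u_k,\theta_k)$. Rotated stage cost: $L(x_k,u_k,\theta_k):=\ell(x_k,u_k,\theta_k)-\mathcal{L}\lambda(x_k,\theta_k)$. Problem $\mathbb{P}(x,\theta)$: minimize $\mathbb{E}[\sum_{j=0}^{N-1}\ell(x_j,u_j,\theta_j)\mid\mathfrak{F}_0]$ over $(u_0,\dots,u_{N-1})$ subject to $x_{k+1}=f(x_k,u_k,\theta_k)$, $(x_k,u_k)\in Y_{\theta_k}$ ($k=0,\dots,N-1$), $(x_0,\theta_0)=(x,\theta)$, $x_N=x_s^{\mathrm{bet}(\theta_{N-1})}$, $u_k\lhd\mathfrak{F}_k$. Rotated problem $\bar{\mathbb{P}}(x,\theta)$: $\widetilde V_N^\star(x,\theta)=\inf\mathbb{E}[\sum_{j=0}^{N-1}L(x_j,u_j,\theta_j)\mid\mathfrak{F}_0]$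 subject to the same constraints. The receding horizon law is the first element of an optimal policy. *)

(* Defs.v *)
From HB Require Import structures.
From mathcomp Require Import all_boot all_order all_algebra.
From mathcomp Require Import all_classical all_reals all_analysis.
Set Implicit Arguments. Unset Strict Implicit. Unset Printing Implicit Defensive.
Import Order.TTheory GRing.Theory Num.Theory.
Import numFieldNormedType.Exports.
Local Open Scope classical_set_scope.
Local Open Scope ring_scope.

Section MJS.
Variables (R : realType) (n m nu : nat).
Variable (P : 'M[R]_nu).
Variable (f : 'rV[R]_n -> 'rV[R]_m -> 'I_nu -> 'rV[R]_n).

Definition mc_stochastic := (forall i j, 0 <= P i j) /\ (forall i, \sum_j P i j = 1).

Fixpoint Pk (k : nat) : 'M[R]_nu :=
  match k with 0 => 1%:M | k'.+1 => Pk k' *m P end.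

Definition mc_irreducible := forall i j, exists k, 0 < Pk k i j.

(* mc_aperiodic: the period gcd{k > 0 | P^k_ii > 0} of every state equals 1 *)
Definition mc_aperiodic :=
  forall i (d : nat), (forall k, (0 < k)%N -> 0 < Pk k i i -> (d %| k)%N) -> d = 1%N.

Definition mc_cover (i : 'I_nu) := [set j | 0 < P i j].

Definition is_bet (bet : 'I_nu -> 'I_nu) :=
  forall i, mc_cover i (bet i) /\ forall j, mc_cover i j -> P i j <= P i (bet i).

(* generator of lambda: L lambda (x,theta) = E[lambda(x+,theta+) - lambda(x,theta) | F_k] *)
Definition genL (lam : 'rV[R]_n -> 'I_nu -> R) x u i : R :=
  \sum_j P i j * lam (f x u i) j - lam x i.

(* probability of the mode path a :: s given theta_0 = a *)
Fixpoint pprob (a : 'I_nu) (s : seq 'I_nu) : R :=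
  match s with [::] => 1 | b :: s' => P a b * pprob b s' end.

(* A policy: u_k is a function of the mode history (theta_0, ..., theta_k);
   given F_0 (i.e. x_0, theta_0), this is exactly F_k-measurability. *)
Definition policy := seq 'I_nu -> 'rV[R]_m.

(* sum of stage costs c(x_k,u_k,theta_k) along the mode path a :: rest,
   hist = modes seen before a, x = current state *)
Fixpoint cost_path (c : 'rV[R]_n -> 'rV[R]_m -> 'I_nu -> R) (pol : policy)
  (hist : seq 'I_nu) (x : 'rV[R]_n) (a : 'I_nu) (rest : seq 'I_nu) : R :=
  let h := rcons hist a in
  c x (pol h) a +
  match rest with
  | [::] => 0
  | b :: rest' => cost_path c pol h (f x (pol h) a) b rest'
  end.

Fixpoint feas_path (Y : 'I_nu -> set ('rV[R]_n * 'rV[R]_m)) (xs : 'I_nu -> 'rV[R]_n)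
  (bet : 'I_nu -> 'I_nu) (pol : policy)
  (hist : seq 'I_nu) (x : 'rV[R]_n) (a : 'I_nu) (rest : seq 'I_nu) : Prop :=
  let h := rcons hist a in
  Y a (x, pol h) /\
  match rest with
  | [::] => f x (pol h) a = xs (bet a)
  | b :: rest' => feas_path Y xs bet pol h (f x (pol h) a) b rest'
  end.

(* horizon N (>= 1): mode paths theta_0 = th, theta_1..theta_{N-1} = t *)
Definition ExpCost (N : nat) c (pol : policy) x th : R :=
  \sum_(t : (N.-1).-tuple 'I_nu) pprob th t * cost_path c pol [::] x th t.

(* constraints hold almost surely *)
Definition Feasible (N : nat) Y xs bet (pol : policy) x th : Prop :=
  forall t : (N.-1).-tuple 'I_nu, 0 < pprob th t -> feas_path Y xs bet pol [::] x th t.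

Definition optimal N c Y xs bet (pol : policy) x th : Prop :=
  Feasible N Y xs bet pol x th /\
  forall pol', Feasible N Y xs bet pol' x th -> ExpCost N c pol x th <= ExpCost N c pol' x th.

Definition Lrot (ell : 'rV[R]_n -> 'rV[R]_m -> 'I_nu -> R) lam x u i : R :=
  ell x u i - genL lam x u i.

(* optimal value of the rotated problem (+oo if infeasible) *)
Definition Vtilde N ell lam Y xs bet x th : \bar R :=
  ereal_inf [set (ExpCost N (Lrot ell lam) pol x th)%:E
            | pol in [set pol | Feasible N Y xs bet pol x th]].

Definition RH_law N ell lam Y xs bet (kappa : 'rV[R]_n -> 'I_nu -> 'rV[R]_m) : Prop :=
  forall x th, (exists pol, Feasible N Y xs bet pol x th) ->
    exists pol, optimal N (Lrot ell lam) Y xs bet pol x th /\ pol [:: th] = kappa x th.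

End MJS.

Definition level_bdd_loc_unif (R : realType) (n m : nat)
  (g : 'rV[R]_n -> 'rV[R]_m -> R) : Prop :=
  forall (xb : 'rV[R]_n) (a : R), exists2 V, nbhs xb V &
    exists M : R, forall x u, V x -> g x u <= a -> `|u| <= M.

Definition convex_fun (R : realType) (n : nat) (g : 'rV[R]_n -> R) : Prop :=
  forall (x y : 'rV[R]_n) (t : R), 0 <= t <= 1 ->
    g (t *: x + (1 - t) *: y) <= t * g x + (1 - t) * g y.

(* Main.v *)
Require Import Defs.
From HB Require Import structures.
From mathcomp Require Import all_boot all_order all_algebra.
From mathcomp Require Import all_classical all_reals all_analysis.
From mathcomp Require Import ring lra zify.
From Stdlib Require Import Lia.
Import Order.TTheory GRing.Theory Num.Theory.
Import numFieldNormedType.Exports.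
Local Open Scope classical_set_scope.
Local Open Scope ring_scope.

Lemma tsum (R : realType) (T : finType) k (F : k.+1.-tuple T -> R) :
  \sum_t F t = \sum_j \sum_(t : k.-tuple T) F [tuple of j :: t].
Proof.
rewrite pair_big /=.
rewrite (reindex (fun p : T * k.-tuple T => [tuple of p.1 :: p.2])) //=.
exists (fun t => (thead t, [tuple of behead t])) => [[a b]|t] _ /=.
  by congr pair; apply: val_inj.
by case/tupleP: t => a b; apply: val_inj.
Qed.

Lemma pprob_ge0 {R : realType} {nu} {P : 'M[R]_nu} :
  (forall i j, 0 <= P i j) -> forall a s, 0 <= pprob P a s.
Proof. by move=> hP a s; elim: s a => [|b s IH] a //=; rewrite mulr_ge0. Qed.

Lemma pprob_sum1 {R : realType} {nu} {P : 'M[R]_nu} :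
  mc_stochastic P -> forall k a, \sum_(t : k.-tuple 'I_nu) pprob P a t = 1.
Proof.
move=> [hP hS]; elim=> [|k IH] a.
  rewrite (eq_bigr (fun _ => 1)) ?sumr_const ?card_tuple //.
  by move=> t _; rewrite (tuple0 t).
rewrite tsum -(hS a); apply: eq_bigr => j _ /=.
by rewrite -mulr_sumr IH mulr1.
Qed.

Fixpoint ExpR {R : realType} {n m nu} (P : 'M[R]_nu)
  (f : 'rV[R]_n -> 'rV[R]_m -> 'I_nu -> 'rV[R]_n)
  (c : 'rV[R]_n -> 'rV[R]_m -> 'I_nu -> R) (pol : seq 'I_nu -> 'rV[R]_m)
  (hist : seq 'I_nu) (x : 'rV[R]_n) (a : 'I_nu) (k : nat) : R :=
  c x (pol (rcons hist a)) a +
  match k with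
  | 0 => 0
  | k'.+1 => \sum_j P a j * ExpR P f c pol (rcons hist a) (f x (pol (rcons hist a)) a) j k'
  end.

Lemma ExpCost_ExpR (R : realType) n m nu (P : 'M[R]_nu) f c pol :
  mc_stochastic P -> forall k hist (x : 'rV[R]_n) a,
  \sum_(t : k.-tuple 'I_nu) pprob P a t * cost_path f c pol hist x a t =
  ExpR (m:=m) P f c pol hist x a k.
Proof.
move=> hPS; elim=> [|k IH] hist x a.
  rewrite (eq_bigr (fun _ => c x (pol (rcons hist a)) a)) ?sumr_const ?card_tuple /=.
    by rewrite expn0 mulr1n addr0.
  by move=> t _; rewrite (tuple0 t) /= mul1r addr0.
rewrite tsum /=.
set u := pol (rcons hist a).
transitivity (\sum_j (P a j * c x u a + P a j * ExpR P f c pol (rcons hist a) (f x u a) j k)).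
  apply: eq_bigr => j _.
  have E : \sum_(t : k.-tuple 'I_nu) pprob P j t * c x u a = c x u a.
    by rewrite -mulr_suml (@pprob_sum1 _ _ _ hPS k j) mul1r.
  rewrite -IH -[in RHS]E !mulr_sumr -big_split /=; apply: eq_bigr => t _.
  by rewrite /= -/u mulrDr !mulrA.
by rewrite big_split /= -mulr_suml (proj2 hPS) mul1r.
Qed.

Lemma wsum_eq (R : realType) nu (P : 'M[R]_nu) (a : 'I_nu) (F G : 'I_nu -> R) :
  (forall i j, 0 <= P i j) -> (forall j, 0 < P a j -> F j = G j) ->
  \sum_j P a j * F j = \sum_j P a j * G j.
Proof.
move=> hP hFG; apply: eq_bigr => j _.
have := hP a j; rewrite le_eqVlt => /orP [/eqP <-|/hFG -> //].
by rewrite !mul0r.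
Qed.

Fixpoint FRY {R : realType} {n m nu} (P : 'M[R]_nu)
  (f : 'rV[R]_n -> 'rV[R]_m -> 'I_nu -> 'rV[R]_n)
  (Y : 'I_nu -> set ('rV[R]_n * 'rV[R]_m)) (xs : 'I_nu -> 'rV[R]_n)
  (bet : 'I_nu -> 'I_nu) (pol : seq 'I_nu -> 'rV[R]_m)
  (hist : seq 'I_nu) (x : 'rV[R]_n) (a : 'I_nu) (k : nat) : Prop :=
  Y a (x, pol (rcons hist a)) /\
  match k with
  | 0 => f x (pol (rcons hist a)) a = xs (bet a)
  | k'.+1 => forall j, 0 < P a j ->
      FRY P f Y xs bet pol (rcons hist a) (f x (pol (rcons hist a)) a) j k'
  end.

Lemma pmul_gt0 {R : realType} {a b : R} : 0 <= a -> 0 <= b -> 0 < a * b -> 0 < a /\ 0 < b.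
Proof.
rewrite le_eqVlt => /orP [/eqP <-|ha]; first by rewrite mul0r ltxx.
rewrite le_eqVlt => /orP [/eqP <-|hb]; first by rewrite mulr0 ltxx.
by [].
Qed.

Lemma pos_row {R : realType} {nu} {P : 'M[R]_nu} :
  mc_stochastic P -> forall a, exists j, 0 < P a j.
Proof.
move=> [hP hS] a; case: (pselect (exists j, 0 < P a j)) => // hn.
exfalso; have : \sum_j P a j = 0.
  apply: big1 => j _; apply/eqP; rewrite eq_le hP andbT leNgt.
  by apply/negP => hj; apply: hn; exists j.
by rewrite hS => /eqP; rewrite oner_eq0.
Qed.

Lemma pos_path {R : realType} {nu} {P : 'M[R]_nu} :
  mc_stochastic P -> forall k a, exists t : k.-tuple 'I_nu, 0 < pprob P a t.
Proof.
move=> hPS; elim=> [|k IH] a; first by exists [tuple]; rewrite /= ltr01.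
have [j hj] := pos_row hPS a; have [t ht] := IH j.
by exists [tuple of j :: t]; rewrite /= mulr_gt0.
Qed.

Lemma Feas_FRY (R : realType) n m nu (P : 'M[R]_nu) f Y xs bet pol :
  mc_stochastic P -> forall k hist (x : 'rV[R]_n) a,
  (forall t : k.-tuple 'I_nu, 0 < pprob P a t ->
     feas_path (m:=m) f Y xs bet pol hist x a t) <->
  FRY P f Y xs bet pol hist x a k.
Proof.
move=> hPS; have hP := proj1 hPS; elim=> [|k IH] hist x a; split.
- by move=> H; apply: (H [tuple]); rewrite /= ltr01.
- by move=> H t _; rewrite (tuple0 t).
- move=> H; split.
    have [t ht] := pos_path hPS k.+1 a.
    by move: (H t ht); case/tupleP: t {ht} => j t /= [].

  move=> j hj; apply/IH => t ht.
  have := H [tuple of j :: t]; rewrite /= mulr_gt0 // => /(_ isT) [].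
  by [].
- move=> [HY H] t; case/tupleP: t => j t /= hp.
  have [hj ht] := pmul_gt0 (hP a j) (pprob_ge0 hP j t) hp.
  by split => //; apply: ((IH _ _ _).2 (H j hj)).
Qed.

Fixpoint Tt {R : realType} {n nu} (P : 'M[R]_nu) (lam : 'rV[R]_n -> 'I_nu -> R)
  (xs : 'I_nu -> 'rV[R]_n) (bet : 'I_nu -> 'I_nu) (k : nat) (a : 'I_nu) : R :=
  match k with
  | 0 => \sum_j P a j * lam (xs (bet a)) j
  | k'.+1 => \sum_j P a j * Tt P lam xs bet k' j
  end.

Lemma rotE (R : realType) n m nu (P : 'M[R]_nu) f Y xs bet pol ell lam :
  (forall i j, 0 <= P i j) -> forall k hist (x : 'rV[R]_n) a,
  FRY (m:=m) P f Y xs bet pol hist x a k ->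
  ExpR P f (Lrot P f ell lam) pol hist x a k =
  ExpR P f ell pol hist x a k + lam x a - Tt P lam xs bet k a.
Proof.
move=> hP; elim=> [|k IH] hist x a /= [_ H].
  by rewrite /Lrot /genL H; lra.
rewrite (@wsum_eq _ _ P a _ (fun j => ExpR P f ell pol (rcons hist a)
    (f x (pol (rcons hist a)) a) j k + lam (f x (pol (rcons hist a)) a) j
    - Tt P lam xs bet k j) hP); last first.
  by move=> j hj; rewrite IH //; apply: H.
set x' := f x (pol (rcons hist a)) a.
rewrite (eq_bigr (fun j => P a j * ExpR P f ell pol (rcons hist a) x' j k +
   P a j * lam x' j - P a j * Tt P lam xs bet k j)); last by move=> j _; ring.
rewrite sumrB big_split /= /Lrot /genL; lra.
Qed.

Lemma shiftF (R : realType) n m nu (P : 'M[R]_nu) f Y xs bet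
  (pol pol' : seq 'I_nu -> 'rV[R]_m) th N (ufin : 'I_nu -> 'I_nu -> 'rV[R]_m) :
  (forall h, (size h < N)%N -> pol' h = pol (th :: h)) ->
  (forall h b, size h = N.-1 -> pol' (rcons h b) = ufin (last th h) b) ->
  (forall a b, Y b (xs (bet a), ufin a b) /\ f (xs (bet a)) (ufin a b) b = xs (bet b)) ->
  forall k hist (x : 'rV[R]_n) a, (size hist + k + 2 = N)%N ->
  FRY P f Y xs bet pol (th :: hist) x a k -> FRY P f Y xs bet pol' hist x a k.+1.
Proof.
move=> h1 h2 hu; elim=> [|k IH] hist x a hs /= [HY H].
  rewrite h1 ?size_rcons; last by rewrite -hs; lia.
  split => // j _; rewrite h2 ?size_rcons; last by rewrite -hs; lia.
  by rewrite last_rcons H; apply: hu.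
rewrite h1 ?size_rcons; last by rewrite -hs; lia.
split => // j hj; apply: IH; last by apply: H.
by rewrite size_rcons -hs; lia.
Qed.

Lemma shiftC (R : realType) n m nu (P : 'M[R]_nu) f Y xs bet
  (pol pol' : seq 'I_nu -> 'rV[R]_m) th N (ufin : 'I_nu -> 'I_nu -> 'rV[R]_m) c ls :
  mc_stochastic P ->
  (forall h, (size h < N)%N -> pol' h = pol (th :: h)) ->
  (forall h b, size h = N.-1 -> pol' (rcons h b) = ufin (last th h) b) ->
  (forall a b, c (xs (bet a)) (ufin a b) b = ls) ->
  forall k hist (x : 'rV[R]_n) a, (size hist + k + 2 = N)%N ->
  FRY P f Y xs bet pol (th :: hist) x a k ->
  ExpR P f c pol' hist x a k.+1 = ExpR P f c pol (th :: hist) x a k + ls.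
Proof.
move=> [hP hS] h1 h2 hu; elim=> [|k IH] hist x a hs /= [HY H].
  rewrite h1 ?size_rcons; last by rewrite -hs; lia.
  have E j : pol' (rcons (rcons hist a) j) = ufin a j.
    by rewrite h2 ?last_rcons // size_rcons -hs; lia.
  under eq_bigr => j _ do rewrite E H hu addr0.
  by rewrite -mulr_suml hS mul1r addr0.
rewrite h1 ?size_rcons; last by rewrite -hs; lia.
rewrite (@wsum_eq _ _ P a _ (fun j => ExpR P f c pol (th :: rcons hist a)
   (f x (pol (th :: rcons hist a)) a) j k + ls) hP); last first.
  move=> j hj; have /= -> // := IH (rcons hist a) _ j _ (H j hj).
  by rewrite size_rcons -hs; lia.
rewrite (eq_bigr (fun j => P a j * ExpR P f c pol (th :: rcons hist a)
   (f x (pol (th :: rcons hist a)) a) j k + P a j * ls)); last by move=> j _; rewrite mulrDr.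
by rewrite big_split /= -mulr_suml hS mul1r addrA.
Qed.

Definition shpol {R : realType} {m nu} (pol : seq 'I_nu -> 'rV[R]_m) (th : 'I_nu) (N : nat)
  (ufin : 'I_nu -> 'I_nu -> 'rV[R]_m) (h : seq 'I_nu) : 'rV[R]_m :=
  if (size h < N)%N then pol (th :: h) else ufin (nth th (th :: h) N.-1) (last th h).

Lemma shpol1 {R : realType} {m nu} (pol : seq 'I_nu -> 'rV[R]_m) th N ufin h :
  (size h < N)%N -> shpol pol th N ufin h = pol (th :: h).
Proof. by rewrite /shpol => ->. Qed.

Lemma shpol2 {R : realType} {m nu} (pol : seq 'I_nu -> 'rV[R]_m) th N ufin h b :
  (0 < N)%N -> size h = N.-1 -> shpol pol th N ufin (rcons h b) = ufin (last th h) b.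
Proof.
move=> hN hs; rewrite /shpol size_rcons hs prednK // ltnn last_rcons.
rewrite -rcons_cons nth_rcons /= hs ltnS leqnn.
have -> : N.-1 = (size (th :: h)).-1 by rewrite /= hs.
by rewrite nth_last.
Qed.

Lemma top_feas (R : realType) n m nu (P : 'M[R]_nu) f Y xs bet
  (pol : seq 'I_nu -> 'rV[R]_m) th N ufin :
  (0 < N)%N ->
  (forall a b, Y b (xs (bet a), ufin a b) /\ f (xs (bet a)) (ufin a b) b = xs (bet b)) ->
  forall (x : 'rV[R]_n) j, 0 < P th j ->
  FRY P f Y xs bet pol [::] x th N.-1 ->
  FRY P f Y xs bet (shpol pol th N ufin) [::] (f x (pol [:: th]) th) j N.-1.
Proof.
move=> hN hu x j hj; case hK: N.-1 => [|K] [HY H].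
  rewrite /= (@shpol2 _ _ _ pol th N ufin [::] j hN) ?hK //= H; exact: hu.
apply: (@shiftF R n m nu P f Y xs bet pol _ th N ufin).
- by move=> h hh; rewrite shpol1.
- by move=> h b hb; rewrite shpol2.
- exact: hu.
- by rewrite /=; lia.
- exact: H.
Qed.

Lemma top_cost (R : realType) n m nu (P : 'M[R]_nu) f Y xs bet
  (pol : seq 'I_nu -> 'rV[R]_m) th N ufin c ls :
  mc_stochastic P -> (0 < N)%N ->
  (forall a b, c (xs (bet a)) (ufin a b) b = ls) ->
  forall (x : 'rV[R]_n),
  FRY P f Y xs bet pol [::] x th N.-1 ->
  exists E : 'I_nu -> R,
    ExpR P f c pol [::] x th N.-1 = c x (pol [:: th]) th + \sum_j P th j * E j /\
    forall j, 0 < P th j ->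
      ExpR P f c (shpol pol th N ufin) [::] (f x (pol [:: th]) th) j N.-1 = E j + ls.
Proof.
move=> hPS hN hu x; case hK: N.-1 => [|K] [HY H].
  exists (fun _ => 0); split; first by rewrite /= big1 ?addr0 // => j _; rewrite mulr0.
  move=> j hj; have /= E := @shpol2 _ _ _ pol th N ufin [::] j hN.
  rewrite /= E ?hK // H hu; lra.
exists (fun j => ExpR P f c pol [:: th] (f x (pol [:: th]) th) j K); split => //.
move=> j hj.
have := @shiftC R n m nu P f Y xs bet pol (shpol pol th N ufin) th N ufin c ls hPS.
move=> /(_ _ _ hu K [::] (f x (pol [:: th]) th) j) -> //.
- by move=> h hh; rewrite shpol1.
- by move=> h b hb; rewrite shpol2.
- by rewrite /=; lia.
- exact: H.
Qed.

Theorem lemma2 (R : realType) (n m nu N : nat)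
  (P : 'M[R]_nu)
  (f : 'rV[R]_n -> 'rV[R]_m -> 'I_nu -> 'rV[R]_n)
  (Y : 'I_nu -> set ('rV[R]_n * 'rV[R]_m))
  (ell : 'rV[R]_n -> 'rV[R]_m -> 'I_nu -> R)
  (bet : 'I_nu -> 'I_nu)
  (xs : 'I_nu -> 'rV[R]_n) (us : 'I_nu -> 'rV[R]_m)
  (lam : 'rV[R]_n -> 'I_nu -> R) :
  (0 < N)%N ->
  (* Markov chain *)
  mc_stochastic P -> mc_irreducible P -> mc_aperiodic P ->
  is_bet P bet ->
  (* well-posedness *)
  (forall x u th, 0 <= ell x u th) ->
  (forall th, lower_semicontinuous (fun z : 'rV[R]_n * 'rV[R]_m => (ell z.1 z.2 th)%:E)) ->
  (forall th, level_bdd_loc_unif (fun x u => ell x u th)) ->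
  (forall th, continuous (fun z : 'rV[R]_n * 'rV[R]_m => f z.1 z.2 th)) ->
  (forall th, Y th !=set0 /\ compact (Y th)) ->
  (* (xs th, us th) is an optimal steady state of mode th *)
  (forall th, f (xs th) (us th) th = xs th /\ Y th (xs th, us th) /\
     forall x u, f x u th = x -> Y th (x, u) -> ell (xs th) (us th) th <= ell x u th) ->
  (* controllability *)
  (forall i j, exists u, Y j (xs i, u) /\ f (xs i) u j = xs (bet j)) ->
  (* recursive feasibility of the rotated problem under its receding horizon law *)
  (forall kappa, RH_law P f N ell lam Y xs bet kappa ->
     forall x th, (exists pol, Feasible P f N Y xs bet pol x th) ->
     forall th', mc_cover P th th' ->
       exists pol', Feasible P f N Y xs bet pol' (f x (kappa x th) th) th')
  /\
  (* same set of minimizers *)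
  (forall x th pol, optimal P f N ell Y xs bet pol x th <->
                    optimal P f N (Lrot P f ell lam) Y xs bet pol x th)
  /\
  (* strict mc_stochastic dissipativity => Lyapunov decrease *)
  (forall (ls lams : R) (rho : 'rV[R]_n -> 'I_nu -> R),
     (forall th, xs th = 0 /\ us th = 0) ->
     (forall th, ell (xs th) (us th) th = ls) ->
     (forall th, lower_semicontinuous (fun x : 'rV[R]_n => (lam x th)%:E)) ->
     (forall th, lam 0 th = lams) ->
     (forall x th, 0 <= rho x th) ->
     (forall th, convex_fun (fun x => rho x th)) ->
     (forall th, rho 0 th = 0) ->
     (forall x th, x != 0 -> 0 < rho x th) ->
     (forall x u th, genL P f lam x u th <= ell x u th - ls - rho x th) ->
     forall kappa, RH_law P f N ell lam Y xs bet kappa ->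
     forall x th, (exists pol, Feasible P f N Y xs bet pol x th) ->
       ((\sum_(j | (0 < P th j)%R)
            (P th j)%:E * Vtilde P f N ell lam Y xs bet (f x (kappa x th) th) j)
         - Vtilde P f N ell lam Y xs bet x th <= - (rho x th)%:E)%E).
Proof.
move=> hN hPS hirr hap hbet hell0 hlsc hlev hcont hY hss hctrl.
have hP := proj1 hPS.
have FE : forall c pol x th, ExpCost P f N c pol x th = ExpR P f c pol [::] x th N.-1.
  by move=> c pol x th; rewrite /ExpCost ExpCost_ExpR.
have FF : forall pol x th, Feasible P f N Y xs bet pol x th <->
    FRY P f Y xs bet pol [::] x th N.-1.
  by move=> pol x th; rewrite /Feasible; apply: Feas_FRY.
pose cu i j := projT1 (cid (hctrl i j)).
have hcu : forall a b, Y b (xs (bet a), cu (bet a) b) /\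
    f (xs (bet a)) (cu (bet a) b) b = xs (bet b).
  by move=> a b; rewrite /cu; case: cid.
split; [|split].
- move=> kappa hRH x th hfe th' hth'.
  have [pol [[hpF _] hk]] := hRH x th hfe.
  exists (shpol pol th N (fun a b => cu (bet a) b)); apply/FF.
  rewrite -hk; apply: top_feas => //; last by apply/FF.
- move=> x th pol.
  have CE : forall pol, Feasible P f N Y xs bet pol x th ->
      ExpCost P f N (Lrot P f ell lam) pol x th =
      ExpCost P f N ell pol x th + lam x th - Tt P lam xs bet N.-1 th.
    move=> p hp; rewrite !FE; apply: rotE => //; exact/FF.
  split => -[hF hopt]; split => // p hp; have := hopt p hp; rewrite !CE //; lra.
- move=> ls lams rho hxs hls _ hlam0 hrho0 _ _ _ hdiss kappa hRH x th hfe.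
  have [pol [[hpF hopt] hk]] := hRH x th hfe.
  have hFR := (FF pol x th).1 hpF.
  have e1 a b : xs (bet a) = xs b by rewrite !(proj1 (hxs _)).
  have hu2 : forall a b, Y b (xs (bet a), (fun _ b => us b) a b) /\
      f (xs (bet a)) ((fun _ b => us b) a b) b = xs (bet b).
    move=> a b /=; rewrite (e1 a b) (e1 b b); have [h1 [h2 _]] := hss b; by split.
  have hc2 : forall a b, Lrot P f ell lam (xs (bet a)) ((fun _ b => us b) a b) b = ls.
    move=> a b /=; rewrite (e1 a b) /Lrot /genL (proj1 (hss b)) hls (proj1 (hxs b)) hlam0.
    under eq_bigr do rewrite hlam0.
    rewrite -mulr_suml (proj2 hPS) mul1r; lra.
  have [E [hE1 hE2]] := @top_cost R n m nu P f Y xs bet pol th N _ _ _ hPS hN hc2 x hFR.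
  have hV : Vtilde P f N ell lam Y xs bet x th =
      (ExpCost P f N (Lrot P f ell lam) pol x th)%:E.
    apply/eqP; rewrite eq_le; apply/andP; split.
    - by apply: ereal_inf_lbound; exists pol.
    - by apply: le_ereal_inf_tmp => _ [p hp <-]; rewrite lee_fin; exact: hopt.
  rewrite -hk.
  have hVj : forall j, 0 < P th j ->
      (Vtilde P f N ell lam Y xs bet (f x (pol [:: th]) th) j <= (E j + ls)%:E)%E.
    move=> j hj; rewrite -hE2 // -FE.
    apply: ereal_inf_lbound; exists (shpol pol th N (fun _ b => us b)) => //.
    by apply/FF; apply: top_feas.
  rewrite hV FE hE1.
  apply: (@le_trans _ _ ((\sum_(j | 0 < P th j) P th j * (E j + ls))%:E -
     (Lrot P f ell lam x (pol [:: th]) th + \sum_j P th j * E j)%:E)%E).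
    apply: leeB => //; rewrite -sumEFin; apply: lee_sum => j hj.
    by rewrite EFinM; apply: lee_wpmul2l; [rewrite lee_fin hP | exact: hVj].
  rewrite -EFinB lee_fin.
  have -> : \sum_(j | 0 < P th j) P th j * (E j + ls) = \sum_j P th j * E j + ls.
    rewrite big_mkcond /=.
    transitivity (\sum_j P th j * (E j + ls)).
      apply: eq_bigr => j _; case: ifP => // hn.
      have : P th j = 0.
        by apply/eqP; rewrite eq_le hP andbT leNgt hn.
      by move=> ->; rewrite mul0r.
    rewrite (eq_bigr (fun j => P th j * E j + P th j * ls)); last by move=> j _; rewrite mulrDr.
    by rewrite big_split /= -mulr_suml (proj2 hPS) mul1r.
  have := hdiss x (pol [:: th]) th; rewrite /Lrot; lra.
Qed.
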